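(* For each $n\ge 2$, the monoids $\mathrm{Cat}_n$, $\mathrm{Styl}_n$, and $\mathrm{Kis}_n$ satisfy the same monoid identities.
   Context: A monoid identity is a formal equality $w=w'$ of words $w,w'$ in the free monoid $X^*$ over an alphabet $X$; it holds in a monoid $M$ if $w\varphi=w'\varphi$ for every homomorphism $\varphi\colon X^*\to M$. The stylic monoid $\mathrm{Styl}_n$ is generated by $a_1,\dots,a_n$ subject to: $a_i^2=a_i$ ($1\le i\le n$); $a_ja_ia_k=a_ja_ka_i$ and $a_ia_ka_j=a_ka_ia_j$ for $1\le i<j<k\le n$; $a_ja_ia_i=a_ia_ja_i$ and $a_ja_ja_i=a_ja_ia_j$ for $1\le i<j\le n$. The Kiselman monoid $\mathrm{Kis}_n$ is generated by $a_1,\dots,a_n$ subject to: $a_i^2=a_i$ ($1\le i\le n$); $a_ia_ja_i=a_ja_ia_j=a_ja_i$ for $1\le i<j\le n$. The Catalan monoid $\mathrm{Cat}_n$ is generated by $a_1,\dots,a_n$ subject to: $a_i^2=a_i$ ($1\le i\le n$); $a_ia_k=a_ka_i$ if $|i-k|\ge2$; $a_ia_{i+1}a_i=a_{i+1}a_ia_{i+1}=a_{i+1}a_i$ for $1\le i\le n-1$. *)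

(* Defs.v *)
From mathcomp Require Import all_boot.
From Stdlib Require Import PropExtensionality FunctionalExtensionality ProofIrrelevance.
Set Implicit Arguments. Unset Strict Implicit. Unset Printing Implicit Defensive.

Record monoid := Monoid {
  mcar :> Type;
  mmul : mcar -> mcar -> mcar;
  mone : mcar;
  mmulA : forall x y z, mmul x (mmul y z) = mmul (mmul x y) z;
  mmul1 : forall x, mmul mone x = x;
  mmulx1 : forall x, mmul x mone = x }.

(** The free monoid X^* is [seq X] with concatenation and [::]. *)
Definition is_hom (X : Type) (M : monoid) (phi : seq X -> M) : Prop :=
  phi [::] = mone M /\ forall u v, phi (u ++ v) = mmul (phi u) (phi v).

Definition holds_identity (M : monoid) (X : Type) (w w' : seq X) : Prop :=
  forall phi : seq X -> M, is_hom phi -> phi w = phi w'.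

Definition same_identities (M N : monoid) : Prop :=
  forall (X : Type) (w w' : seq X), holds_identity M w w' <-> holds_identity N w w'.

Section Presentation.
Variable A : Type.
Variable R : seq A -> seq A -> Prop.

Inductive cong : seq A -> seq A -> Prop :=
| cong_base p q u v : R u v -> cong (p ++ u ++ q) (p ++ v ++ q)
| cong_refl w : cong w w
| cong_sym u v : cong u v -> cong v u
| cong_trans u v w : cong u v -> cong v w -> cong u w.

Lemma cong_catr u u' v : cong u u' -> cong (u ++ v) (u' ++ v).
Proof.
elim=> [p q x y Rxy| w | x y _ IH | x y z _ IH1 _ IH2].
- by have := cong_base p (q ++ v) Rxy; rewrite -!catA.
- exact: cong_refl.
- exact: cong_sym.
- exact: cong_trans IH2.
Qed.

Lemma cong_catl u v v' : cong v v' -> cong (u ++ v) (u ++ v').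
Proof.
elim=> [p q x y Rxy| w | x y _ IH | x y z _ IH1 _ IH2].
- by have := cong_base (u ++ p) q Rxy; rewrite -!catA.
- exact: cong_refl.
- exact: cong_sym.
- exact: cong_trans IH2.
Qed.

Lemma cong_cat u u' v v' : cong u u' -> cong v v' -> cong (u ++ v) (u' ++ v').
Proof. move=> H1 H2; apply: cong_trans (cong_catr v H1) (cong_catl u' H2). Qed.

Lemma cong_class_eq u v : cong u v -> cong u = cong v.
Proof.
move=> H; apply: functional_extensionality => w; apply: propositional_extensionality.
split=> H'; [exact: cong_trans (cong_sym H) H' | exact: cong_trans H H'].
Qed.

Definition pclass := {P : seq A -> Prop | exists w, P = cong w}.

Definition pcl (w : seq A) : pclass := exist _ (cong w) (ex_intro _ w erefl).

Definition pmul_pred (x y : pclass) : seq A -> Prop :=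
  fun w => exists u v, proj1_sig x u /\ proj1_sig y v /\ cong w (u ++ v).

Lemma pmul_pred_cl (u0 v0 : seq A) (x y : pclass) :
  proj1_sig x = cong u0 -> proj1_sig y = cong v0 -> pmul_pred x y = cong (u0 ++ v0).
Proof.
move=> Hx Hy; apply: functional_extensionality => w; apply: propositional_extensionality.
rewrite /pmul_pred Hx Hy; split.
- move=> [u [v [Hu [Hv Hw]]]].
  exact: cong_trans (cong_cat Hu Hv) (cong_sym Hw).
- move=> Hw; exists u0, v0; split; [exact: cong_refl | split; [exact: cong_refl|]].
  exact: cong_sym.
Qed.

Lemma pmul_proof (x y : pclass) : exists w, pmul_pred x y = cong w.
Proof.
case: x => P [u0 Hu]; case: y => Q [v0 Hv].
exists (u0 ++ v0); exact: pmul_pred_cl.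
Qed.

Definition pmul (x y : pclass) : pclass := exist _ (pmul_pred x y) (pmul_proof x y).

Lemma pclass_eq (x y : pclass) : proj1_sig x = proj1_sig y -> x = y.
Proof.
case: x => P HP; case: y => Q HQ /= E; subst Q; congr exist; exact: proof_irrelevance.
Qed.

Lemma pclE (x : pclass) : exists w, x = pcl w.
Proof. case: x => P [w Hw]; exists w; apply: pclass_eq => /=; exact: Hw. Qed.

Lemma pmul_pcl u v : pmul (pcl u) (pcl v) = pcl (u ++ v).
Proof. apply: pclass_eq => /=; exact: pmul_pred_cl. Qed.

Lemma pmulA (x y z : pclass) : pmul x (pmul y z) = pmul (pmul x y) z.
Proof.
have [u ->] := pclE x; have [v ->] := pclE y; have [w ->] := pclE z.
by rewrite !pmul_pcl catA.
Qed.

Lemma pmul1 (x : pclass) : pmul (pcl [::]) x = x.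
Proof. by have [u ->] := pclE x; rewrite pmul_pcl. Qed.

Lemma pmulx1 (x : pclass) : pmul x (pcl [::]) = x.
Proof. by have [u ->] := pclE x; rewrite pmul_pcl cats0. Qed.

Definition presented_monoid : monoid :=
  @Monoid pclass pmul (pcl [::]) pmulA pmul1 pmulx1.

End Presentation.

(** * The three families. Generator a_i (1 <= i <= n) is the ordinal i-1 : 'I_n,
    so the order of generators is preserved. *)

Definition styl_rel (n : nat) (u v : seq 'I_n) : Prop :=
  (exists i : 'I_n, u = [:: i; i] /\ v = [:: i])
  \/ (exists i j k : 'I_n, i < j < k /\
        ((u = [:: j; i; k] /\ v = [:: j; k; i]) \/ (u = [:: i; k; j] /\ v = [:: k; i; j])))
  \/ (exists i j : 'I_n, i < j /\
        ((u = [:: j; i; i] /\ v = [:: i; j; i]) \/ (u = [:: j; j; i] /\ v = [:: j; i; j]))).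

Definition kis_rel (n : nat) (u v : seq 'I_n) : Prop :=
  (exists i : 'I_n, u = [:: i; i] /\ v = [:: i])
  \/ (exists i j : 'I_n, i < j /\
        ((u = [:: i; j; i] /\ v = [:: j; i]) \/ (u = [:: j; i; j] /\ v = [:: j; i]))).

Definition cat_rel (n : nat) (u v : seq 'I_n) : Prop :=
  (exists i : 'I_n, u = [:: i; i] /\ v = [:: i])
  \/ (exists i k : 'I_n, (i + 2 <= k \/ k + 2 <= i) /\ u = [:: i; k] /\ v = [:: k; i])
  \/ (exists i j : 'I_n, j = i + 1 :> nat /\
        ((u = [:: i; j; i] /\ v = [:: j; i]) \/ (u = [:: j; i; j] /\ v = [:: j; i]))).

Definition Styl (n : nat) : monoid := presented_monoid (@styl_rel n).
Definition Kis (n : nat) : monoid := presented_monoid (@kis_rel n).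
Definition Cat (n : nat) : monoid := presented_monoid (@cat_rel n).

(* Main.v *)
Require Import Defs.
From mathcomp Require Import all_boot.
From Stdlib Require Import ClassicalEpsilon Classical.
Set Implicit Arguments. Unset Strict Implicit. Unset Printing Implicit Defensive.

Lemma cong_pcl A (R : seq A -> seq A -> Prop) u v : cong R u v -> pcl R u = pcl R v.
Proof. move=> H; apply: pclass_eq => /=; exact: cong_class_eq. Qed.

Lemma pcl_cong A (R : seq A -> seq A -> Prop) u v : pcl R u = pcl R v -> cong R u v.
Proof.
move=> E; have E' : cong R u = cong R v by exact: (f_equal (@proj1_sig _ _) E).
by rewrite E'; exact: cong_refl.
Qed.

Lemma hom_rep A (R : seq A -> seq A -> Prop) X (phi : seq X -> presented_monoid R) :
  is_hom phi -> exists f : X -> seq A, forall w, phi w = pcl R (flatten (map f w)).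
Proof.
move=> [H0 HM].
pose f x := proj1_sig (constructive_indefinite_description _ (pclE (phi [:: x]))).
have Hf x : phi [:: x] = pcl R (f x).
  by rewrite /f; case: (constructive_indefinite_description _ _).
exists f; elim=> [|x w IH] /=; first exact: H0.
by rewrite -cat1s HM Hf IH /= pmul_pcl.
Qed.

Lemma hom_of A (R : seq A -> seq A -> Prop) X (g : seq X -> seq A) :
  g [::] = [::] -> (forall u v, g (u ++ v) = g u ++ g v) ->
  @is_hom X (presented_monoid R) (fun w => pcl R (g w)).
Proof. by move=> H0 HM; split=> [|u v] /=; rewrite ?H0 // HM pmul_pcl. Qed.

Lemma cong_mono A (R1 R2 : seq A -> seq A -> Prop) :
  (forall u v, R1 u v -> cong R2 u v) -> forall u v, cong R1 u v -> cong R2 u v.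
Proof.
move=> H u v; elim=> [p q x y Rxy| w | x y _ IH | x y z _ IH1 _ IH2].
- by apply: cong_catl; apply: cong_catr; apply: H.
- exact: cong_refl.
- exact: cong_sym.
- exact: cong_trans IH2.
Qed.

Lemma quotient_ids A (R1 R2 : seq A -> seq A -> Prop) :
  (forall u v, R1 u v -> cong R2 u v) ->
  forall X (w w' : seq X), holds_identity (presented_monoid R1) w w' ->
    holds_identity (presented_monoid R2) w w'.
Proof.
move=> H X w w' Hid phi Hphi.
have [f Hf] := hom_rep Hphi.
pose g (u : seq X) := flatten (map f u).
have Hg : @is_hom X (presented_monoid R1) (fun u => pcl R1 (g u)).
  by apply: hom_of => // u v; rewrite /g map_cat flatten_cat.
have := Hid _ Hg => /= /pcl_cong /(cong_mono H) /cong_pcl.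
by rewrite !Hf.
Qed.

Section Rels.
Variable n : nat.
Local Notation I := ('I_n).

Lemma cong_base1 (R : seq I -> seq I -> Prop) p q u v :
  R u v -> cong R (p ++ u ++ q) (p ++ v ++ q).
Proof. exact: cong_base. Qed.

Lemma cong_rel (R : seq I -> seq I -> Prop) u v : R u v -> cong R u v.
Proof. by move=> H; have := cong_base [::] [::] H; rewrite /= !cats0. Qed.

Lemma kis_styl u v : kis_rel u v -> cong (@styl_rel n) u v.
Proof.
case=> [[i [-> ->]]|[i [j [lij [[-> ->]|[-> ->]]]]]].
- by apply: cong_rel; left; exists i.
- (* i j i ~ j i : i j i = j i i = j i *)
  apply: cong_trans (_ : cong _ [:: j; i; i] _).
    apply: cong_sym; apply: cong_rel; right; right; exists i, j; split=> //; by left.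
  have := @cong_base _ (@styl_rel n) [:: j] [::] [:: i; i] [:: i].
  by apply; left; exists i.
- apply: cong_trans (_ : cong _ [:: j; j; i] _).
    apply: cong_sym; apply: cong_rel; right; right; exists i, j; split=> //; by right.
  have := @cong_base _ (@styl_rel n) [::] [:: i] [:: j; j] [:: j].
  by apply; left; exists j.
Qed.

Lemma cat_comm_pair (i k : I) : i + 2 <= k \/ k + 2 <= i -> cong (@cat_rel n) [:: i; k] [:: k; i].
Proof. by move=> H; apply: cong_rel; right; left; exists i, k. Qed.

Lemma cat_idem p q (i : I) : cong (@cat_rel n) (p ++ [:: i; i] ++ q) (p ++ [:: i] ++ q).
Proof. by apply: cong_base; left; exists i. Qed.

Lemma cat_iji (i j : I) : i < j -> cong (@cat_rel n) [:: i; j; i] [:: j; i].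
Proof.
move=> lij; case: (ltngtP j i.+1) => [|hj|hj]; first by rewrite ltnS leqNgt lij.
- have H2 : i + 2 <= j \/ j + 2 <= i by left; rewrite addn2.
  apply: cong_trans (_ : cong _ [:: i; i; j] _).
    apply: (@cong_base _ (@cat_rel n) [:: i] [::] [:: j; i] [:: i; j]).
    right; left; exists j, i; split=> //; by case: H2; [right|left].
  apply: cong_trans (_ : cong _ [:: i; j] _).
    by have := cat_idem [::] [:: j] i.
  exact: cat_comm_pair.
- by apply: cong_rel; right; right; exists i, j; split; [rewrite hj addn1 | left].
Qed.

Lemma cat_jij (i j : I) : i < j -> cong (@cat_rel n) [:: j; i; j] [:: j; i].
Proof.
move=> lij; case: (ltngtP j i.+1) => [|hj|hj]; first by rewrite ltnS leqNgt lij.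
- have H2 : i + 2 <= j \/ j + 2 <= i by left; rewrite addn2.
  apply: cong_trans (_ : cong _ [:: j; j; i] _).
    by have := @cong_base _ (@cat_rel n) [:: j] [::] [:: i; j] [:: j; i];
       apply; right; left; exists i, j.
  by have := cat_idem [::] [:: i] j.
- by apply: cong_rel; right; right; exists i, j; split; [rewrite hj addn1 | right].
Qed.

Lemma styl_cat u v : styl_rel u v -> cong (@cat_rel n) u v.
Proof.
case=> [[i [-> ->]]|[[i [j [k [/andP[lij ljk] [[-> ->]|[-> ->]]]]]]|[i [j [lij [[-> ->]|[-> ->]]]]]]].
- by apply: cong_rel; left; exists i.
- have H2 : i + 2 <= k \/ k + 2 <= i by left; rewrite addn2; apply: leq_ltn_trans ljk.
  by have := @cong_base _ (@cat_rel n) [:: j] [::] [:: i; k] [:: k; i];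
     apply; right; left; exists i, k.
- have H2 : i + 2 <= k \/ k + 2 <= i by left; rewrite addn2; apply: leq_ltn_trans ljk.
  by have := @cong_base _ (@cat_rel n) [::] [:: j] [:: i; k] [:: k; i];
     apply; right; left; exists i, k.
- apply: cong_trans (_ : cong _ [:: j; i] _).
    by have := cat_idem [:: j] [::] i.
  by apply: cong_sym; apply: cat_iji.
- apply: cong_trans (_ : cong _ [:: j; i] _).
    by have := cat_idem [::] [:: i] j.
  by apply: cong_sym; apply: cat_jij.
Qed.
End Rels.

Section Match.
Variable T : eqType.
Implicit Types d s t u v : seq T.

Fixpoint mtch d u : seq T :=
  if u is y :: u' then mtch (if d is x :: d' then (if x == y then d' else d) else d) u' else d.

Lemma mtch_cat d u v : mtch d (u ++ v) = mtch (mtch d u) v.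
Proof. by elim: u d => [|y u IH] d //=; rewrite IH. Qed.

Lemma mtch_nil u : mtch [::] u = [::].
Proof. by elim: u. Qed.

Lemma mtch_drop d u : exists j, mtch d u = drop j d.
Proof.
elim: u d => [|y u IH] d /=; first by exists 0; rewrite drop0.
case: d => [|x d]; first by rewrite mtch_nil; exists 0.
case: eqP => _.
  by have [j ->] := IH d; exists j.+1; rewrite /= .
by have [j ->] := IH (x :: d); exists j.
Qed.

Lemma mtch_size d u : size (mtch d u) <= size d.
Proof. by have [j ->] := mtch_drop d u; rewrite size_drop leq_subr. Qed.

Lemma subseq_mtch d u : subseq d u = (mtch d u == [::]).
Proof.
elim: u d => [|y u IH] d /=; first by case: d.
by case: d => [|x d] //=; rewrite ?mtch_nil // IH.
Qed.

Lemma mtch_notin s x t u : x \notin u -> mtch (s ++ x :: t) u = mtch s u ++ x :: t.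
Proof.
elim: u s => [|y u IH] s //=; rewrite inE negb_or => /andP[xy xu].
case: s => [|z s] /=.
  by rewrite (negbTE xy) (IH [::]).
by case: eqP => _; rewrite ?(IH s) ?(IH (z :: s)).
Qed.

Lemma mtch_catg s t u :
  mtch (s ++ t) u = mtch s u ++ t \/ (mtch s u = [::] /\ size (mtch (s ++ t) u) <= size t).
Proof.
elim: u s => [|y u IH] s; first by left.
case: s => [|x s].
  by right; split; [exact: mtch_nil | exact: (mtch_size t (y :: u))].
rewrite /=; by case: eqP => _; [apply: (IH s) | apply: (IH (x :: s))].
Qed.

Lemma mtch_notin_all d u : (forall x, x \in d -> x \notin u) -> mtch d u = d.
Proof.
case: d => [|x d] H; first exact: mtch_nil.
by rewrite -[x :: d]cat0s mtch_notin ?mtch_nil // H // mem_head.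
Qed.

End Match.
From mathcomp Require Import zify.

Section Kis.
Variable n : nat.
Local Notation I := ('I_n).
Local Notation K := (cong (@kis_rel n)).
Definition gtI : rel I := fun x y => y < x.
Definition dec (d : seq I) := sorted gtI d.

Lemma gtI_trans : transitive gtI.
Proof. by move=> y x z /= h1 h2; apply: ltn_trans h1. Qed.

Lemma dec_cons x d : dec (x :: d) -> dec d /\ all (fun y : I => y < x) d.
Proof.
move=> H; split; first exact: (path_sorted H).
exact: (order_path_min gtI_trans H).
Qed.

Lemma dec_mtch d u : dec d -> dec (mtch d u).
Proof. by move=> H; have [j ->] := mtch_drop d u; apply: drop_sorted. Qed.

Lemma all_mtch (P : pred I) d u : all P d -> all P (mtch d u).
Proof.
move=> /allP H; have [j ->] := mtch_drop d u.
by apply/allP => x /mem_drop; apply: H.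
Qed.

Lemma kis_mtch l r e : kis_rel l r -> dec e -> mtch e l = mtch e r.
Proof.
have E3 : forall x y z (r : seq I), dec [:: x, y, z & r] -> y < x /\ z < y.
  move=> x y z r' /dec_cons [/dec_cons [_ /= /andP[h _]] /= /andP[h' _]] //.
have E2 : forall x y, dec [:: x; y] -> y < x.
  by move=> x y /dec_cons [_ /= /andP[h _]].
case=> [[i [-> ->]]|[i [j [lij [[-> ->]|[-> ->]]]]]];
case: e => [|x [|y [|z r']]] He //=;
  try (have [hxy hyz] := E3 _ _ _ _ He); try (have hxy := E2 _ _ He);
  repeat (case: eqP => //= ?; subst); try lia.
Qed.

Definition Deq (k : nat) (u v : seq I) :=
  forall d, dec d -> all (fun x : I => x < k) d -> mtch d u = mtch d v.

Lemma K_sound u v : K u v -> forall e, dec e -> mtch e u = mtch e v.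
Proof.
elim=> [p q x y Rxy| w | x y _ IH | x y z _ IH1 _ IH2] e He //.
- by rewrite !mtch_cat (kis_mtch Rxy) //; apply: dec_mtch.
- by rewrite IH.
- by rewrite IH1 ?IH2.
Qed.

Lemma K_Deq k u v : K u v -> Deq k u v.
Proof. by move=> H d Hd _; apply: K_sound. Qed.

Lemma Deq_refl k u : Deq k u u.
Proof. by []. Qed.
Lemma Deq_sym k u v : Deq k u v -> Deq k v u.
Proof. by move=> H d H1 H2; rewrite H. Qed.
Lemma Deq_trans k u v w : Deq k u v -> Deq k v w -> Deq k u w.
Proof. by move=> H H' d H1 H2; rewrite H ?H'. Qed.
Lemma Deq_cat k u u' v v' : Deq k u u' -> Deq k v v' -> Deq k (u ++ v) (u' ++ v').
Proof.
move=> H H' d H1 H2; rewrite !mtch_cat H // H' //.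
  exact: dec_mtch.
exact: all_mtch.
Qed.

Lemma K_idem (i : I) : K [:: i; i] [:: i].
Proof. by apply: cong_rel; left; exists i. Qed.
Lemma K_iji (i j : I) : i < j -> K [:: i; j; i] [:: j; i].
Proof. by move=> h; apply: cong_rel; right; exists i, j; split=> //; left. Qed.
Lemma K_jij (i j : I) : i < j -> K [:: j; i; j] [:: j; i].
Proof. by move=> h; apply: cong_rel; right; exists i, j; split=> //; right. Qed.

Lemma K_catl u v v' : K v v' -> K (u ++ v) (u ++ v').
Proof. exact: cong_catl. Qed.
Lemma K_catr u u' v : K u u' -> K (u ++ v) (u' ++ v).
Proof. exact: cong_catr. Qed.

Lemma K_up (i : I) w : all (fun x : I => i < x) w -> K (i :: w ++ [:: i]) (w ++ [:: i]).
Proof.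
elim: w => [|x w IH] /=; first by move=> _; apply: K_idem.
move=> /andP[hx hw].
apply: cong_trans (_ : K ([:: i; x] ++ (i :: w ++ [:: i])) _).
  by apply: (K_catl [:: i; x]); apply: cong_sym; apply: IH.
apply: cong_trans (_ : K ([:: x; i] ++ w ++ [:: i]) _).
  by rewrite -[i :: w ++ _]cat1s catA; apply: K_catr; apply: K_iji.
by apply: (K_catl [:: x]); apply: IH.
Qed.

Lemma K_down (i : I) w : all (fun x : I => x < i) w -> K (i :: w ++ [:: i]) (i :: w).
Proof.
elim: w => [|x w IH] /=; first by move=> _; apply: K_idem.
move=> /andP[hx hw].
apply: cong_trans (_ : K ([:: i; x] ++ (i :: w ++ [:: i])) _).
  exact: (K_catr (w ++ [:: i]) (cong_sym (K_jij hx))).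
apply: cong_trans (_ : K ([:: i; x] ++ (i :: w)) _).
  by apply: K_catl; apply: IH.
exact: (K_catr w (K_jij hx)).
Qed.

Definition Fin (p : seq I) (i : I) : Prop :=
  exists p1 p2, p = p1 ++ i :: p2 /\ all (fun x : I => i < x) p2.

Lemma decP d : dec d = pairwise gtI d.
Proof. exact: (sorted_pairwise gtI_trans). Qed.

Lemma last_occ (c : I) p : c \in p -> exists p1 p2, p = p1 ++ c :: p2 /\ c \notin p2.
Proof.
elim: p => [|x p IH] //; rewrite inE => H.
case Hp: (c \in p).
  by have [p1 [p2 [-> h]]] := IH Hp; exists (x :: p1), p2.
move: H; rewrite Hp orbF => /eqP E; subst x.
by exists [::], p; rewrite Hp.
Qed.

Lemma first_occ (c : I) p : c \in p -> exists p1 p2, p = p1 ++ c :: p2 /\ c \notin p1.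
Proof.
elim: p => [|x p IH] //; rewrite inE; case: eqP => [-> _|hx /= Hp].
  by exists [::], p.
have [p1 [p2 [-> h]]] := IH Hp; exists (x :: p1), p2; split=> //.
by rewrite inE negb_or h andbT; apply/eqP => E; apply: hx.
Qed.

Lemma dec_split d1 (c : I) t : dec (d1 ++ c :: t) -> all (fun y : I => c < y) d1.
Proof.
rewrite decP pairwise_cat allrel_consr => /andP[/andP[H _] _]; exact: H.
Qed.

Lemma mtch_last s (c : I) p1 p2 : all (fun y : I => c < y) s -> c \notin p2 ->
  mtch (s ++ [:: c]) (p1 ++ c :: p2) = [::] -> mtch s p1 = [::].
Proof.
move=> Hs Hc; rewrite mtch_cat.
case: (mtch_catg s [:: c] p1) => [->|[//]].
case Em: (mtch s p1) => [//|x r] /=.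
have hx : x != c.
  have [j Ej] := mtch_drop s p1; move: Em; rewrite Ej => Em.
  have : x \in s by apply: (mem_drop (n0:=j)); rewrite Em mem_head.
  by move/allP: Hs => Hs /Hs; rewrite eq_sym; apply: contraTneq => ->; rewrite ltnn.
rewrite /= (negbTE hx) -cat_cons (mtch_notin _ _ Hc).
by case: (mtch _ p2).
Qed.

Lemma mtch1 (e : seq I) (c : I) :
  mtch e [:: c] = if e is x :: t then (if x == c then t else e) else e.
Proof. by case: e. Qed.

Lemma BLside k p p' (c : I) d t : c < k -> ~ Fin p' c ->
  Deq k (p ++ [:: c]) (p' ++ [:: c]) -> dec d -> all (fun x : I => x < k) d ->
  mtch d p = c :: t -> mtch d p' = t -> False.
Proof.
move=> ck nF HD Hd Hk Ep Ep'.
have [j Ej] := mtch_drop d p.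
set d1 := take j d.
have Ed : d = (d1 ++ [:: c]) ++ t by rewrite -catA /= -Ep Ej cat_take_drop.
have Hd1 : all (fun y : I => c < y) d1 by apply: (@dec_split _ c t); rewrite -cat1s catA -Ed.
have cp' : c \in p'.
  apply/negPn/negP => cn.
  move: Ep'; rewrite Ed -catA (mtch_notin _ _ cn) => /(congr1 size).
  rewrite size_cat /=; lia.
have M1 : mtch (d1 ++ [:: c]) p' = [::].
  case: (mtch_catg (d1 ++ [:: c]) t p'); rewrite -Ed Ep'; last by case.
  move=> /(congr1 size); rewrite size_cat => H.
  by apply/eqP; rewrite -size_eq0; apply/eqP; lia.
have [p1 [p2 [Ep2 cp2]]] := last_occ cp'.
have [jj jp2 jc] : exists2 jj : I, jj \in p2 & jj < c.
  have /allPn [jj jp2 hj] : ~~ all (fun x : I => c < x) p2.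
    by apply/negP => H; apply: nF; exists p1, p2.
  exists jj => //; rewrite ltn_neqAle leqNgt hj andbT.
  by apply/negP => /eqP E; move: cp2; rewrite -(val_inj E) jp2.
have M1' : mtch d1 p1 = [::] by apply: (mtch_last Hd1 cp2); rewrite -Ep2.
set dd := d1 ++ [:: c; jj].
have Hdd : dec dd.
  have : dec (d1 ++ c :: t) by rewrite -cat1s catA -Ed.
  rewrite /dd !decP !pairwise_cat /= allrel_consr => /and3P[/andP[a1 _] p1' _].
  rewrite p1' /= !andbT allrel_consr a1 allrel1r /gtI /= jc andbT.
  by apply/allP => y /(allP Hd1) hy; apply: ltn_trans hy.
have Hkk : all (fun x : I => x < k) dd.
  move: Hk; rewrite Ed /dd !all_cat /= => /andP[/andP[-> /andP[-> _]] _] /=.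
  by rewrite (ltn_trans jc ck).
have E1 : mtch dd (p' ++ [:: c]) = [::].
  have : subseq dd p'.
    rewrite Ep2 /dd; apply: cat_subseq; first by rewrite subseq_mtch M1'.
    by rewrite /= eqxx sub1seq.
  by rewrite subseq_mtch mtch_cat => /eqP ->; rewrite mtch_nil.
have E2 := HD _ Hdd Hkk; rewrite E1 mtch_cat in E2.
have N1 : mtch (d1 ++ [:: c]) p != [::].
  apply/eqP => H0.
  case: (mtch_catg (d1 ++ [:: c]) t p); rewrite -Ed Ep H0 /=.
    by move/(congr1 size) => /=; lia.
  by case=> _ /=; lia.
case: (mtch_catg (d1 ++ [:: c]) [:: jj] p); rewrite -catA /= -/dd; last by case=> /eqP; rewrite (negbTE N1).
move=> E3; move: E2; rewrite E3 mtch1.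
case: (mtch (d1 ++ [:: c]) p) => [|x r] /=.
  by case: eqP => // E; move: jc; rewrite E ltnn.
by case: eqP => _; case: r.
Qed.

Lemma BL k p p' (c : I) : c < k -> ~ Fin p c -> ~ Fin p' c ->
  Deq k (p ++ [:: c]) (p' ++ [:: c]) -> Deq k p p'.
Proof.
move=> ck nF nF' HD d Hd Hk.
have Hc := HD d Hd Hk; rewrite !mtch_cat !mtch1 in Hc.
have S1 := BLside ck nF' HD Hd Hk.
have S2 := BLside ck nF (Deq_sym HD) Hd Hk.
move: Hc S1 S2.
case: (mtch d p) => [|x t]; case: (mtch d p') => [|y t'] //.
- case: eqP => [->|_] // Et _ S2; exfalso; by apply: (S2 [::]); rewrite ?Et.
- case: eqP => [->|_] // Et S1 _; exfalso; by apply: (S1 [::]); rewrite ?Et.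
- case: eqP => [Ex|Nx]; case: eqP => [Ey|Ny] //.
  + by move=> ->; rewrite Ex Ey.
  + by move=> Et S1 _; exfalso; subst x; apply: (S1 t).
  + by move=> Et _ S2; exfalso; subst y; apply: (S2 t').
Qed.

Definition Bk k (i : I) z := Deq k (i :: z) z.

Lemma B_cons k (i c : I) z : i < c -> Bk k i z -> Bk k i (c :: z).
Proof.
move=> ic H.
apply: Deq_trans (_ : Deq k ([:: i; c; i] ++ z) _).
  exact: (Deq_cat (@Deq_refl k [:: i; c]) (Deq_sym H)).
apply: Deq_trans (_ : Deq k ([:: c; i] ++ z) _).
  exact: (Deq_cat (@K_Deq k _ _ (K_iji ic)) (@Deq_refl k z)).
exact: (Deq_cat (@Deq_refl k [:: c]) H).
Qed.

Lemma Cprime k z : all (fun x : I => x < k) z -> forall p p',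
  (forall i, Fin p i -> ~ Bk k i z) -> (forall i, Fin p' i -> ~ Bk k i z) ->
  Deq k (p ++ z) (p' ++ z) -> Deq k p p'.
Proof.
elim: z => [|c z IH] Hz p p' Hp Hp' HD; first by rewrite !cats0 in HD.
move: Hz => /= /andP[ck Hz].
case: (classic (Bk k c z)) => Bc.
- have Hiff : forall i, Bk k i (c :: z) <-> Bk k i z.
    move=> i; split=> H.
    + have H1 : Deq k (i :: z) (i :: c :: z) := Deq_cat (@Deq_refl k [:: i]) (Deq_sym Bc).
      exact: (Deq_trans H1 (Deq_trans H Bc)).
    + have H1 : Deq k (i :: c :: z) (i :: z) := Deq_cat (@Deq_refl k [:: i]) Bc.
      exact: (Deq_trans H1 (Deq_trans H (Deq_sym Bc))).
  apply: IH => //.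
  + by move=> i /Hp; rewrite Hiff.
  + by move=> i /Hp'; rewrite Hiff.
  apply: Deq_trans (_ : Deq k (p ++ c :: z) _).
    exact: (Deq_cat (@Deq_refl k p) (Deq_sym Bc)).
  apply: Deq_trans HD _.
  exact: (Deq_cat (@Deq_refl k p') Bc).
- have HF : forall q, (forall i, Fin q i -> ~ Bk k i (c :: z)) ->
     forall i, Fin (q ++ [:: c]) i -> ~ Bk k i z.
    move=> q Hq i [q1 [q2 [Eq Hq2]]].
    case/lastP: q2 Eq Hq2 => [|q2 y] Eq Hq2.
      by move: Eq; rewrite !cats1 => /rcons_inj [_ <-].
    move: Eq; rewrite -rcons_cons -rcons_cat !cats1 => /rcons_inj [Eq Ey].
    subst y; move: Hq2; rewrite -cats1 all_cat /= andbT => /andP[H1 H2] Bi.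
    apply: (Hq i); first by exists q1, q2.
    exact: B_cons.
  have Hcc : Bk k c (c :: z).
    exact: (Deq_cat (@K_Deq k _ _ (K_idem c)) (@Deq_refl k z)).
  apply: (BL ck).
  + by move=> F; apply: (Hp c F).
  + by move=> F; apply: (Hp' c F).
  apply: IH => //; try by apply: HF.
  by rewrite -!catA.
Qed.

Definition Pk k := forall u v, all (fun x : I => x < k) u -> all (fun x : I => x < k) v ->
  Deq k u v -> K u v.

Lemma K_absorb_step (i : I) w z : all (fun x : I => i < x) w -> K z (i :: z) ->
  K (i :: w ++ z) (w ++ z).
Proof.
move=> Hw Hz.
apply: cong_trans (_ : K ((i :: w ++ [:: i]) ++ z) _).
  by rewrite /= -catA; apply: (K_catl (i :: w)).
apply: cong_trans (_ : K ((w ++ [:: i]) ++ z) _).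
  by apply: K_catr; apply: K_up.
by rewrite -catA; apply: K_catl; apply: cong_sym.
Qed.

Lemma absorb k (m : I) z : val m = k -> Pk k -> all (fun x : I => x < k) z ->
  forall p, all (fun x : I => x < k) p -> exists q, [/\ all (fun x : I => x < k) q,
    K (p ++ m :: z) (q ++ m :: z), Deq k (p ++ z) (q ++ z) & (forall i, Fin q i -> ~ Bk k i z)].
Proof.
move=> Em IHk Hz.
suff : forall s p, size p <= s -> all (fun x : I => x < k) p -> exists q, [/\ all (fun x : I => x < k) q,
    K (p ++ m :: z) (q ++ m :: z), Deq k (p ++ z) (q ++ z) & (forall i, Fin q i -> ~ Bk k i z)].
  by move=> H p; apply: (H (size p)).
elim=> [|s IH] p Hs Hp.
  move: Hs; rewrite leqn0 size_eq0 => /eqP ->.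
  exists [::]; split=> //; first exact: cong_refl.
  by move=> i [p1 [p2 [/(congr1 size)]]]; rewrite size_cat /= addnS.
case: (classic (exists i, Fin p i /\ Bk k i z)) => [[i [[p1 [p2 [Ep Hp2]]] Bi]]|nB]; last first.
  exists p; split=> //; first exact: cong_refl.
  by move=> i Fi Bi; apply: nB; exists i.
have ik : i < k by move: Hp; rewrite Ep all_cat /= => /andP[_ /andP[-> _]].
have Kz : K z (i :: z).
  apply: IHk => //=; first by rewrite ik.
  exact: Deq_sym.
have [||q [Hq K1 D1 F1]] := IH (p1 ++ p2).
- by move: Hs; rewrite Ep !size_cat /= addnS ltnS.
- by move: Hp; rewrite Ep !all_cat /= => /andP[-> /andP[_ ->]].
exists q; split=> //.
- apply: cong_trans K1; rewrite Ep -!catA /=; apply: K_catl.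
  rewrite -[m :: z]cat1s catA; apply: (K_absorb_step _ Kz).
  by rewrite all_cat Hp2 /= Em ik.
- apply: Deq_trans D1; rewrite Ep -!catA /=; apply: (Deq_cat (@Deq_refl k p1)).
  by apply: K_Deq; apply: K_absorb_step Kz.
Qed.

Lemma Lprime k (m : I) : val m = k -> Pk k -> forall p p' z,
  all (fun x : I => x < k) p -> all (fun x : I => x < k) p' -> all (fun x : I => x < k) z ->
  Deq k (p ++ z) (p' ++ z) -> K (p ++ m :: z) (p' ++ m :: z).
Proof.
move=> Em IHk p p' z Hp Hp' Hz HD.
have [q [Hq K1 D1 F1]] := absorb Em IHk Hz Hp.
have [q' [Hq' K1' D1' F1']] := absorb Em IHk Hz Hp'.
have Dq : Deq k q q'.
  apply: (Cprime Hz F1 F1').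
  exact: (Deq_trans (Deq_sym D1) (Deq_trans HD D1')).
apply: cong_trans K1 _; apply: cong_trans _ (cong_sym K1').
by apply: K_catr; apply: IHk.
Qed.

Lemma Deq_mono k u v : Deq k.+1 u v -> Deq k u v.
Proof.
move=> H d Hd Hk; apply: H => //; apply: sub_all Hk => x /= h; exact: ltnW.
Qed.

Lemma K_filter (m : I) w : forall y, all (fun x : I => x < m) y ->
  all (fun x : I => x <= m) w -> K (m :: y ++ w) (m :: y ++ filter (fun x => x != m) w).
Proof.
elim: w => [|x w IH] y Hy /=; first by move=> _; apply: cong_refl.
move=> /andP[hx hw]; case: eqP => [E|N] /=.
- subst x; apply: cong_trans (IH y Hy hw).
  have := K_catr w (K_down Hy); by rewrite /= -catA.
- have Hy' : all (fun x : I => x < m) (y ++ [:: x]).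
    rewrite all_cat Hy /= andbT ltn_neqAle hx andbT.
    by apply/negP => /eqP E; apply: N; apply: val_inj.
  have := IH _ Hy' hw; by rewrite -!catA.
Qed.

Lemma mtch_skip (e : seq I) (y : I) w : y \notin e -> mtch e (y :: w) = mtch e w.
Proof.
case: e => [|x e] //=; rewrite inE negb_or => /andP[h _].
by rewrite eq_sym (negbTE h).
Qed.

Theorem completeness_k k : Pk k.
Proof.
elim: k => [|k IHk] u v Hu Hv HD.
  by case: u Hu HD => [|x u] //; case: v Hv => [|y v] // _ _ _; apply: cong_refl.
case: (leqP n k) => nk.
  have Hle : forall w : seq I, all (fun x : I => x < k) w.
    by move=> w; apply/allP => x _; apply: leq_trans (ltn_ord x) nk.
  by apply: IHk; rewrite ?Hle //; apply: Deq_mono.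
pose m : I := Ordinal nk.
have Em : val m = k by [].
have decm : dec [:: m] by [].
have allm : all (fun x : I => x < k.+1) [:: m] by rewrite /= ltnSn.
have Hm := HD _ decm allm.
have memm : forall w : seq I, (m \in w) = (mtch [:: m] w == [::]).
  by move=> w; rewrite -sub1seq subseq_mtch.
have lt_of : forall w : seq I, all (fun x : I => x < k.+1) w -> m \notin w ->
    all (fun x : I => x < k) w.
  move=> w Hw Hnm; apply/allP => x xw.
  have := allP Hw x xw; rewrite ltnS leq_eqVlt => /orP[/eqP E|//].
  by move: Hnm; rewrite -(_ : x = m) ?xw //; apply: val_inj.
case mu: (m \in u).
- have mv : m \in v by rewrite memm -Hm -memm.
  have decomp : forall w, all (fun x : I => x < k.+1) w -> m \in w -> exists w0 z,
      [/\ all (fun x : I => x < k) w0, all (fun x : I => x < k) z, K w (w0 ++ m :: z) & m \notin w0].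
    move=> w Hw mw; have [w0 [w1 [Ew nw0]]] := first_occ mw.
    exists w0, (filter (fun x => x != m) w1); split=> //.
    + by apply: lt_of nw0; move: Hw; rewrite Ew all_cat => /andP[].
    + apply: lt_of; last by rewrite mem_filter eqxx.
      by rewrite all_filter; apply/allP => x xw1 /=; apply/implyP => _;
         move: Hw; rewrite Ew all_cat /= => /and3P[_ _ /allP]; apply.
    + rewrite Ew; apply: K_catl; apply: (K_filter (y:=[::])) => //.
      move: Hw; rewrite Ew all_cat /= => /and3P[_ _ H].
      by apply: sub_all H => x /=; rewrite ltnS.
  have [u0 [z [Hu0 Hz Ku nu0]]] := decomp u Hu mu.
  have [v0 [zv [Hv0 Hzv Kv nv0]]] := decomp v Hv mv.
  have HD' : Deq k.+1 (u0 ++ m :: z) (v0 ++ m :: zv).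
    exact: (Deq_trans (Deq_sym (@K_Deq k.+1 _ _ Ku)) (Deq_trans HD (@K_Deq k.+1 _ _ Kv))).
  have Dz : Deq k z zv.
    move=> d Hd Hk.
    have Hmd : dec (m :: d).
      case: d Hd Hk => [|x d] //= -> /andP[hx _]; by rewrite andbT /gtI /=.
    have Hmk : all (fun x : I => x < k.+1) (m :: d).
      by rewrite /= ltnSn; apply: sub_all Hk => x /= h; apply: ltnW.
    have := HD' _ Hmd Hmk.
    have E1 := @mtch_notin _ [::] m d u0 nu0; rewrite mtch_nil /= in E1.
    have E2 := @mtch_notin _ [::] m d v0 nv0; rewrite mtch_nil /= in E2.
    by rewrite !mtch_cat E1 E2 /= eqxx.
  have Duz : Deq k (u0 ++ z) (v0 ++ zv).
    move=> d Hd Hk.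
    have Hk' : all (fun x : I => x < k.+1) d by apply: sub_all Hk => x /= h; apply: ltnW.
    have := HD' _ Hd Hk'; rewrite !mtch_cat !mtch_skip //.
    + apply/negP => /(allP (all_mtch v0 Hk)); by rewrite /= ltnn.
    + apply/negP => /(allP (all_mtch u0 Hk)); by rewrite /= ltnn.
  have Kz : K z zv by apply: IHk.
  apply: cong_trans Ku _; apply: cong_trans _ (cong_sym Kv).
  apply: cong_trans (_ : K (v0 ++ m :: z) _).
    apply: (Lprime Em IHk) => //.
    apply: Deq_trans Duz _; apply: Deq_cat (@Deq_refl k v0) _.
    exact: (Deq_sym (@K_Deq k _ _ Kz)).
  by apply: K_catl; apply: (K_catl [:: m]).
- have mv : m \notin v by rewrite memm -Hm -memm mu.
  apply: IHk; rewrite ?lt_of ?mu //; exact: Deq_mono.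
Qed.

Theorem completeness u v : (forall d, dec d -> mtch d u = mtch d v) -> K u v.
Proof.
move=> H; apply: (completeness_k (k:=n)).
- by apply/allP => x _; apply: ltn_ord.
- by apply/allP => x _; apply: ltn_ord.
by move=> d Hd _; apply: H.
Qed.
End Kis.

Section CatK.
Variable n : nat.
Local Notation I := ('I_n).

Definition act (t : I) (s : nat) : nat := if s == t.+1 then (t : nat) else s.
Definition run (s : nat) (u : seq I) := foldl (fun s t => act t s) s u.

Lemma run_cat s u v : run s (u ++ v) = run (run s u) v.
Proof. by rewrite /run foldl_cat. Qed.

Lemma cat_run l r s : cat_rel l r -> run s l = run s r.
Proof.
case=> [[i [-> ->]]|[[i [k [H [-> ->]]]]|[i [j [E [[-> ->]|[-> ->]]]]]]];
rewrite /run /act /=;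
repeat (match goal with |- context [?x == ?y] =>
   lazymatch x with context [if _ then _ else _] => fail | _ => case: (x =P y) => ? end end);
try lia.
Qed.

Lemma cong_run u v : cong (@cat_rel n) u v -> forall s, run s u = run s v.
Proof.
elim=> [p q x y Rxy| w | x y _ IH | x y z _ IH1 _ IH2] s //.
- by rewrite !run_cat (cat_run _ Rxy).
- by rewrite IH1 IH2.
Qed.

Definition sg (d : seq I) (g : I) : seq I :=
  if g \in d then [:: insubd g (size d - (index g d).+1)] else [::].
Definition sig (d : seq I) (u : seq I) := flatten (map (sg d) u).

Lemma sig_cat d u v : sig d (u ++ v) = sig d u ++ sig d v.
Proof. by rewrite /sig map_cat flatten_cat. Qed.

Lemma run0 u : run 0 u = 0.
Proof. by elim: u => [|t u IH] //=; rewrite /act /=. Qed.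

Lemma run_sig d : uniq d -> size d <= n -> forall u j, j <= size d ->
  run (size d - j) (sig d u) = size (mtch (drop j d) u).
Proof.
move=> Ud Sd; elim=> [|g u IH] j Hj.
  by rewrite /= size_drop.
have Esg : sig d [:: g] = sg d g by rewrite /sig /= cats0.
rewrite -cat1s sig_cat run_cat Esg.
case: (ltnP j (size d)) => Hj'; last first.
  have -> : j = size d by lia.
  by rewrite subnn !run0 drop_size /= mtch_nil.
rewrite (drop_nth g Hj') [mtch _ (_ :: _)]/=.
case: eqP => [Eg|Ng].
- have gd : g \in d by rewrite -Eg mem_nth.
  have Ei : index g d = j by rewrite -Eg index_uniq.
  rewrite /sg gd Ei /= /act val_insubd.
  have lt1 : size d - j.+1 < n by apply: leq_trans Sd; rewrite subnSK // leq_subr.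
  rewrite lt1 subnSK // eqxx.
  exact: IH.
- have -> : run (size d - j) (sg d g) = size d - j.
    rewrite /sg; case gd: (g \in d) => //=.
    rewrite /act val_insubd.
    have ig : index g d < size d by rewrite index_mem.
    have lt1 : size d - (index g d).+1 < n by apply: leq_trans Sd; rewrite subnSK // leq_subr.
    rewrite lt1 subnSK //; case: eqP => // E.
    exfalso; apply: Ng; have Eij : index g d = j.
      by rewrite -(subKn (ltnW Hj')) E subKn // ltnW.
    by rewrite -Eij nth_index.
  rewrite -(drop_nth g Hj'); exact: IH.
Qed.

Lemma mtch_sizeE (T : eqType) (d u : seq T) : mtch d u = drop (size d - size (mtch d u)) d.
Proof.
have [j Ej] := mtch_drop d u; rewrite Ej size_drop.
case: (leqP j (size d)) => h; first by rewrite subKn.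
have -> : size d - j = 0 by apply/eqP; rewrite subn_eq0 ltnW.
by rewrite subn0 drop_size drop_oversize // ltnW.
Qed.
End CatK.

Lemma uniq_size_ord n (d : seq 'I_n) : uniq d -> size d <= n.
Proof.
move=> U; rewrite -(card_uniqP U); apply: leq_trans (max_card _) _.
by rewrite card_ord.
Qed.

Lemma cat_to_kis n X (w w' : seq X) :
  holds_identity (Cat n) w w' -> holds_identity (Kis n) w w'.
Proof.
move=> Hid phi Hphi.
have [f Hf] := hom_rep Hphi.
rewrite !Hf; apply: cong_pcl; apply: completeness => d Hd.
have Ud : uniq d.
  apply: (sorted_uniq (@gtI_trans n)) Hd.
  by move=> x; rewrite /gtI ltnn.
pose g (u : seq X) := sig d (flatten (map f u)).
have Hg : @is_hom X (Cat n) (fun u => pcl (@cat_rel n) (g u)).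
  apply: hom_of => // u v; by rewrite /g map_cat flatten_cat sig_cat.
have C := pcl_cong (Hid _ Hg).
have R := cong_run C (size d); rewrite -[size d]subn0 in R.
rewrite !(@run_sig n d Ud (uniq_size_ord Ud)) // !drop0 in R.
by rewrite (mtch_sizeE d (flatten (map f w))) R -mtch_sizeE.
Qed.

Theorem theorem1 (n : nat) : 2 <= n ->
  same_identities (Cat n) (Styl n) /\ same_identities (Styl n) (Kis n).
Proof.
move=> _.
have KS : forall X (w w' : seq X), holds_identity (Kis n) w w' -> holds_identity (Styl n) w w'.
  by move=> X w w'; apply: quotient_ids; apply: kis_styl.
have SC : forall X (w w' : seq X), holds_identity (Styl n) w w' -> holds_identity (Cat n) w w'.
  by move=> X w w'; apply: quotient_ids; apply: styl_cat.
have CK : forall X (w w' : seq X), holds_identity (Cat n) w w' -> holds_identity (Kis n) w w'.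
  by move=> X w w'; apply: cat_to_kis.
split=> X w w'; split.
- by move=> H; apply: KS; apply: CK.
- exact: SC.
- by move=> H; apply: CK; apply: SC.
- exact: KS.
Qed.
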